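(* Let $f:(0,\infty)\to(0,\infty)$ be continuous, let $F(x)=\int_x^1\frac{du}{f(u)}$ for $x>0$, and suppose $\lim_{x\to0^+}F(x)=+\infty$, so that the inverse $F^{-1}$ of the strictly decreasing function $F$ is defined for all large $t$. If $f\in\mathrm{RV}_0(\infty)$, i.e. \[ \lim_{x\to0^+}\frac{f(\lambda x)}{f(x)}=\begin{cases}+\infty,&\lambda>1,\\ 0,&\lambda<1,\end{cases} \] then $F^{-1}\in\mathrm{RV}_\infty(0)$.
   Context: $\mathrm{RV}_\infty(0)$ (slowly varying at infinity): measurable positive $h$ with $\lim_{t\to\infty}h(\lambda t)/h(t)=1$ for every $\lambda>0$. *)

(* Defs.v *)
From Stdlib Require Import Reals.
Open Scope R_scope.

Definition tends_to_infty_at_0plus (g : R -> R) : Prop :=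
  forall B : R, exists delta : R, 0 < delta /\
    forall x : R, 0 < x < delta -> g x > B.

Definition tends_to_0_at_0plus (g : R -> R) : Prop :=
  forall eps : R, 0 < eps -> exists delta : R, 0 < delta /\
    forall x : R, 0 < x < delta -> Rabs (g x) < eps.

Definition RV0_infty (f : R -> R) : Prop :=
  (forall lam : R, 1 < lam -> tends_to_infty_at_0plus (fun x => f (lam * x) / f x)) /\
  (forall lam : R, 0 < lam < 1 -> tends_to_0_at_0plus (fun x => f (lam * x) / f x)).

Definition slowly_varying_at_infty (h : R -> R) : Prop :=
  forall lam : R, 0 < lam ->
    forall eps : R, 0 < eps -> exists M : R,
      forall t : R, t > M -> Rabs (h (lam * t) / h t - 1) < eps.

(* Main.v *)
Require Import Defs.
From Stdlib Require Import Reals Lra Psatz.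
From Coquelicot Require Import Coquelicot.
Open Scope R_scope.

Section S.
Variables (f F : R -> R).
Hypothesis hcont : forall x : R, 0 < x -> continuity_pt f x.
Hypothesis hpos : forall x : R, 0 < x -> 0 < f x.
Hypothesis hF : forall x : R, 0 < x ->
          exists pr : Riemann_integrable (fun u => / f u) x 1, F x = RiemannInt pr.
Hypothesis hFinf : tends_to_infty_at_0plus F.
Hypothesis hRV : RV0_infty f.

Let h := fun u => / f u.

Lemma exh a b : 0 < a -> 0 < b -> ex_RInt h a b.
Proof.
  intros ha hb. apply (ex_RInt_continuous (V:=R_CompleteNormedModule)). intros z [hz1 hz2].
  assert (0 < z). { apply Rlt_le_trans with (Rmin a b); auto. unfold Rmin; destruct Rle_dec; lra. }
  apply continuity_pt_filterlim. unfold h.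
  apply (continuity_pt_inv f z (hcont z H)). specialize (hpos z H); lra.
Qed.

Lemma FR x : 0 < x -> F x = RInt h x 1.
Proof.
  intros hx. destruct (hF x hx) as [pr ->]. symmetry. apply RInt_Reals.
Qed.

Lemma Fsplit a b : 0 < a -> 0 < b -> F a = RInt h a b + F b.
Proof.
  intros ha hb. rewrite (FR a ha), (FR b hb).
  rewrite <- (RInt_Chasles h a b 1); [reflexivity| apply exh; lra | apply exh; lra].
Qed.

Lemma Fmono a b : 0 < a -> a <= b -> F b <= F a.
Proof.
  intros ha hab. rewrite (Fsplit a b); try lra.
  assert (0 <= RInt h a b). { apply RInt_ge_0; auto. apply exh; lra.
    intros x hx. unfold h. left. apply Rinv_0_lt_compat, hpos; lra. }
  lra.
Qed.

Lemma key L m : 1 < L -> 0 < m < 1 ->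
  exists d, 0 < d /\ forall x, 0 < x < d -> F (m * x) > L * F x.
Proof.
  intros hL hm.
  destruct hRV as [_ h2].
  destruct (h2 m hm (m / (2 * L))) as [d0 [hd0 Hd0]].
  { apply Rdiv_lt_0_compat; lra. }
  set (c := d0 / 2).
  destruct (hFinf (2 * F c - F (m * c) / L)) as [d1 [hd1 Hd1]].
  exists (Rmin c d1). split. { apply Rmin_pos; unfold c; lra. }
  intros x [hx0 hx]. assert (hxc : x < c) by (eapply Rlt_le_trans; [exact hx| apply Rmin_l]).
  assert (hxd : x < d1) by (eapply Rlt_le_trans; [exact hx| apply Rmin_r]).
  assert (hc : 0 < c) by lra.
  rewrite (Fsplit (m * x) (m * c)); try nra.
  assert (E : RInt h (m * x) (m * c) = RInt (fun y => m * h (m * y)) x c).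
  { assert (Hx : ex_RInt h (m * x + 0) (m * c + 0)) by (apply exh; nra).
    pose proof (RInt_comp_lin (V:=R_CompleteNormedModule) h m 0 x c Hx) as K.
    rewrite !Rplus_0_r in K. rewrite <- K. apply RInt_ext. intros y _.
    rewrite Rplus_0_r. reflexivity. }
  assert (hexc : ex_RInt (fun y => m * h (m * y)) x c).
  { assert (Hx : ex_RInt h (m * x + 0) (m * c + 0)) by (apply exh; nra).
    pose proof (ex_RInt_comp_lin (V:=R_NormedModule) h m 0 x c Hx) as K.
    eapply ex_RInt_ext; [|exact K]. intros y _. cbv beta. rewrite Rplus_0_r. reflexivity. }
  assert (I1 : RInt (fun y => m * h (m * y)) x c >= RInt (fun y => (2 * L) * h y) x c).
  { apply Rle_ge, RInt_le; auto. lra.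
    apply (ex_RInt_scal h x c (2 * L)). apply exh; lra.
    intros y hy. unfold h.
    assert (fy : 0 < f y) by (apply hpos; lra).
    assert (fmy : 0 < f (m * y)) by (apply hpos; nra).
    assert (hq : f (m * y) / f y < m / (2 * L)).
    { specialize (Hd0 y ltac:(unfold c in *; lra)). rewrite Rabs_pos_eq in Hd0; auto.
      left; apply Rdiv_lt_0_compat; auto. }
    assert (hq' : f (m * y) < m / (2 * L) * f y).
    { apply (Rmult_lt_compat_r (f y)) in hq; auto. unfold Rdiv in hq. rewrite Rmult_assoc, Rinv_l in hq; lra. }
    unfold Rdiv in hq'.
    assert (/ (2*L) > 0) by (apply Rinv_0_lt_compat; lra).
    assert (2 * L * / (2 * L) = 1) by (field; lra).
    apply (Rmult_le_reg_r (f (m * y) * f y)). nra.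
    replace (2 * L * / f y * (f (m * y) * f y)) with (2 * L * f (m * y)) by (field; lra).
    replace (m * / f (m * y) * (f (m * y) * f y)) with (m * f y) by (field; lra).
    nra. }
  rewrite <- E in I1.
  assert (Hx : ex_RInt h x c) by (apply exh; lra).
  pose proof (RInt_scal (V:=R_CompleteNormedModule) h x c (2*L) Hx) as K.
  assert (K2 : RInt (fun y => 2*L*h y) x c = 2*L*RInt h x c) by exact K.
  rewrite K2 in I1. pose proof (Fsplit x c hx0 hc) as Fs.
  specialize (Hd1 x ltac:(lra)).
  assert (L * F x > L * (2 * F c - F (m * c) / L)) by (apply Rmult_lt_compat_l; lra).
  replace (L * (2 * F c - F (m * c) / L)) with (2 * L * F c - F (m*c)) in H by (field; lra).
  assert (I2 : 2 * L * RInt h x c = 2 * L * F x - 2 * L * F c) by (rewrite Fs; ring).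
  set (r1 := RInt h (m*x) (m*c)) in *. set (r2 := RInt h x c) in *.
  lra.
Qed.

Variables (G : R -> R) (T : R).
Hypothesis hG : forall t : R, t > T -> 0 < G t /\ F (G t) = t.

Lemma Gsmall d : 0 < d -> exists M, forall t, t > M -> G t < d.
Proof.
  intros hd. exists (Rmax T (F d)). intros t ht.
  assert (t > T) by (eapply Rle_lt_trans; [apply Rmax_l|exact ht]).
  assert (t > F d) by (eapply Rle_lt_trans; [apply Rmax_r|exact ht]).
  destruct (hG t H) as [g1 g2].
  destruct (Rlt_or_le (G t) d) as [|hge]; auto.
  pose proof (Fmono d (G t) hd hge). lra.
Qed.

Lemma Gmono L t : 1 < L -> t > T -> t > 0 -> G (L * t) <= G t.
Proof.
  intros hL ht ht0. destruct (hG t ht) as [a1 a2].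
  destruct (hG (L * t)) as [b1 b2]. nra.
  destruct (Rle_or_lt (G (L * t)) (G t)) as [|hlt]; auto.
  pose proof (Fmono (G t) (G (L*t)) a1 (Rlt_le _ _ hlt)). nra.
Qed.

Lemma Glow L m : 1 < L -> 0 < m < 1 ->
  exists M, forall t, t > M -> t > T /\ t > 0 /\ m * G t <= G (L * t) /\ G (L * t) <= G t.
Proof.
  intros hL hm. destruct (key L m hL hm) as [d [hd Hd]].
  destruct (Gsmall d hd) as [M1 HM1].
  exists (Rmax (Rmax T 0) M1). intros t ht.
  assert (t > T) by (eapply Rle_lt_trans; [|exact ht]; eapply Rle_trans; [apply Rmax_l|apply Rmax_l]).
  assert (t > 0) by (eapply Rle_lt_trans; [|exact ht]; eapply Rle_trans; [apply Rmax_r|apply Rmax_l]).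
  assert (t > M1) by (eapply Rle_lt_trans; [apply Rmax_r|exact ht]).
  split; auto. split; auto. split; [|apply Gmono; auto].
  destruct (hG t H) as [a1 a2]. destruct (hG (L * t)) as [b1 b2]. nra.
  destruct (Rle_or_lt (m * G t) (G (L * t))) as [|hlt]; auto.
  pose proof (Fmono (G (L*t)) (m * G t) b1 (Rlt_le _ _ hlt)).
  specialize (Hd (G t) (conj a1 (HM1 t H1))). rewrite a2 in Hd. rewrite b2 in H2. lra.
Qed.

Lemma ratio_bound a b m e : 0 < b -> m * b <= a -> a <= b -> 0 < m -> 1 - m < e -> Rabs (a / b - 1) < e.
Proof.
  intros hb h1 h2 hm he.
  assert (ib : 0 < / b) by (apply Rinv_0_lt_compat; lra).
  assert (bi : b * / b = 1) by (field; lra).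
  unfold Rdiv. apply Rabs_def1; nra.
Qed.

Lemma ratio_bound2 a b m e : 0 < b -> m * a <= b -> b <= a -> 0 < m -> / m - 1 < e -> Rabs (a / b - 1) < e.
Proof.
  intros hb h1 h2 hm he.
  assert (ib : 0 < / b) by (apply Rinv_0_lt_compat; lra).
  assert (bi : b * / b = 1) by (field; lra).
  assert (im : m * / m = 1) by (field; lra).
  assert (0 < / m) by (apply Rinv_0_lt_compat; lra).
  unfold Rdiv. apply Rabs_def1; try nra.
Qed.

Lemma main_sec : slowly_varying_at_infty G.
Proof.
  intros lam hlam e he.
  set (m := / (1 + e / 2)).
  assert (hm0 : 0 < m) by (apply Rinv_0_lt_compat; lra).
  assert (hm1 : m < 1). { unfold m. rewrite <- Rinv_1. apply Rinv_lt_contravar; lra. }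
  assert (hme : 1 - m < e).
  { unfold m. assert ((1 + e/2) * / (1 + e/2) = 1) by (field; lra).
    assert (0 < / (1 + e/2)) by (apply Rinv_0_lt_compat; lra). nra. }
  assert (hime : / m - 1 < e). { unfold m. rewrite Rinv_inv. lra. }
  destruct (Rtotal_order lam 1) as [hl|[hl|hl]].
  - assert (hL : 1 < / lam). { rewrite <- Rinv_1. apply Rinv_lt_contravar; lra. }
    destruct (Glow (/ lam) m hL (conj hm0 hm1)) as [M HM].
    exists (M / lam). intros t ht.
    assert (hs : lam * t > M).
    { apply (Rmult_lt_compat_l lam) in ht; auto. replace (lam * (M / lam)) with M in ht by (field; lra). lra. }
    destruct (HM _ hs) as [s1 [s2 [s3 s4]]].
    replace (/ lam * (lam * t)) with t in * by (field; lra).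
    destruct (hG t) as [g1 _].
    { assert (t > lam * t) by nra. lra. }
    apply (ratio_bound2 _ _ m); auto.
  - subst lam. exists T. intros t ht. rewrite Rmult_1_l.
    destruct (hG t ht) as [g1 _]. unfold Rdiv. rewrite Rinv_r; [|lra].
    rewrite Rminus_diag, Rabs_R0. auto.
  - destruct (Glow lam m hl (conj hm0 hm1)) as [M HM].
    exists M. intros t ht. destruct (HM t ht) as [s1 [s2 [s3 s4]]].
    destruct (hG t s1) as [g1 _].
    apply (ratio_bound _ _ m); auto.
Qed.

End S.

Theorem mainTheorem9
  (f F : R -> R)
  (hcont : forall x : R, 0 < x -> continuity_pt f x)
  (hpos : forall x : R, 0 < x -> 0 < f x)
  (hF : forall x : R, 0 < x ->
          exists pr : Riemann_integrable (fun u => / f u) x 1, F x = RiemannInt pr)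
  (hFinf : tends_to_infty_at_0plus F)
  (hRV : RV0_infty f)
  (G : R -> R) (T : R)
  (hG : forall t : R, t > T -> 0 < G t /\ F (G t) = t) :
  slowly_varying_at_infty G.
Proof.
  exact (main_sec f F hcont hpos hF hFinf hRV G T hG).
Qed.
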